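(* In the stochastic epidemic model described in the context, let $u(k)=K\,I(k)$ for all $k\ge0$ with a constant gain $0\le K\le (1-d_{\max})/v_{\max}$. Then for every $k\ge1$, $$\mathbb{E}[D(k)]=\begin{cases}\dfrac{\overline{d_I}\,I_0\left(1-(1+\overline{\delta}-\overline{d_I}-K\overline{v})^k\right)}{K\overline{v}-\overline{\delta}+\overline{d_I}}, & K\overline{v}-\overline{\delta}+\overline{d_I}>0,\\[2mm] \overline{d_I}\,I_0\,k, & K\overline{v}-\overline{\delta}+\overline{d_I}=0.\end{cases}$$
   Context: Time is indexed by days $k=0,1,2,\dots$. Let $(\delta(k))_{k\ge0}$, $(d_I(k))_{k\ge0}$, $(v(k))_{k\ge0}$ be three mutually independent sequences of random variables, each sequence i.i.d. in $k$, with $0\le \delta(k)\le \delta_{\max}$, $0\le d_I(k)\le d_{\max}$ where $d_{\max}<1$, and $0<v_{\min}\le v(k)\le v_{\max}\le 1$. Write $\overline{\delta}=\mathbb{E}[\delta(k)]$, $\overline{d_I}=\mathbb{E}[d_I(k)]$, $\overline{v}=\mathbb{E}[v(k)]$. Given a control sequence $u(k)$, the cases evolve by $S(k+1)=S(k)-\delta(k)I(k)$, $I(k+1)=(1+\delta(k))I(k)-v(k)u(k)-d_I(k)I(k)$, $R(k+1)=R(k)+v(k)u(k)$, $D(k+1)=D(k)+d_I(k)I(k)$, with $S(0)=S_0$, $I(0)=I_0>0$, $R(0)=D(0)=0$, $I_0\delta_{\max}<S_0$. *)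

(* Defs.v *)
From HB Require Import structures.
From mathcomp Require Import all_boot all_order all_algebra.
From mathcomp Require Import all_classical all_reals all_analysis.
Set Implicit Arguments. Unset Strict Implicit. Unset Printing Implicit Defensive.
Import Order.TTheory GRing.Theory Num.Theory.
Local Open Scope classical_set_scope.
Local Open Scope ring_scope.

Definition mutually_independent {d} {T : measurableType d} {R : realType}
  (P : probability T R) {I : eqType} (X : I -> T -> R) : Prop :=
  forall (J : seq I) (B : I -> set R),
    uniq J -> (forall i, i \in J -> measurable (B i)) ->
    P (\bigcap_(i in [set i | i \in J]) (X i @^-1` B i)) =
    (\prod_(i <- J) P (X i @^-1` B i))%E.

Definition identically_distributed {d} {T : measurableType d} {R : realType}
  (P : probability T R) (X : nat -> T -> R) : Prop :=
  forall (k : nat) (B : set R), measurable B ->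
    P (X k @^-1` B) = P (X 0%N @^-1` B).

Definition three_seqs {T R : Type} (a b c : nat -> T -> R)
  (i : nat + (nat + nat)) : T -> R :=
  match i with
  | inl k => a k
  | inr (inl k) => b k
  | inr (inr k) => c k
  end.

(* Main.v *)
Require Import Defs.
From HB Require Import structures.
From mathcomp Require Import all_boot all_order all_algebra.
From mathcomp Require Import all_classical all_reals all_analysis.
From mathcomp Require Import ring lra.
Import Order.TTheory GRing.Theory Num.Theory.
Local Open Scope classical_set_scope.
Local Open Scope ring_scope.

Set Implicit Arguments.
Section ExSec.
Context d (T : measurableType d) (R : realType) (P : probability T R).

Definition bm (f : T -> R) :=
  measurable_fun setT f /\ exists M, forall x, `|f x| <= M.

Lemma bm_Lfun f : bm f -> f \in Lfun P 1.
Proof.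
move=> [mf [M hM]]; apply/Lfun1_integrable.
apply: measurable_bounded_integrable => //.
  by have := probability_setT P; rewrite /= => ->; rewrite ltry.

exists M; split; first exact: num_real.
move=> y My x _ /=; exact: (le_trans (hM x) (ltW My)).
Qed.

Definition Ex (f : T -> R) : R := fine ('E_P[f]).

Lemma EE f : bm f -> 'E_P[f]%E = (Ex f)%:E.
Proof. by move=> bf; rewrite /Ex fineK// expectation_fin_num// bm_Lfun. Qed.

Lemma bm_cst c : bm (fun _ => c).
Proof. split; [exact: measurable_cst | by exists `|c|]. Qed.

Lemma bmD f g : bm f -> bm g -> bm (fun x => f x + g x).
Proof.
move=> [mf [M hM]] [mg [N hN]]; split; first exact: measurable_realfun.measurable_funD.
exists (M + N) => x; apply: (le_trans (ler_normD _ _)); exact: lerD.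
Qed.

Lemma bmM f g : bm f -> bm g -> bm (fun x => f x * g x).
Proof.
move=> [mf [M hM]] [mg [N hN]]; split; first exact: measurable_realfun.measurable_funM.
exists (M * N) => x; rewrite normrM; apply: ler_pM => //.
Qed.

Lemma bmN f : bm f -> bm (fun x => - f x).
Proof.
move=> [mf [M hM]]; split; last by exists M => x; rewrite normrN.
have -> : (fun x => - f x) = (fun x => (-1) * f x) by apply/funext => x; rewrite mulN1r.
exact: measurable_realfun.measurable_funM.
Qed.

Lemma bm_ind A : measurable A -> bm (\1_A : T -> R).
Proof.
move=> mA; split; first exact: measurable_realfun.measurable_indic.
exists 1 => x; rewrite indicE; case: (x \in A) => /=; rewrite ?normr1 ?normr0 //.
Qed.

Lemma bm_ext f g : f =1 g -> bm f -> bm g.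
Proof. by move=> /funext ->. Qed.

Lemma Ex_ext f g : f =1 g -> Ex f = Ex g.
Proof. by move=> /funext ->. Qed.

Lemma ExD f g : bm f -> bm g -> Ex (fun x => f x + g x) = Ex f + Ex g.
Proof.
move=> bf bg; apply: EFin_inj.
rewrite -EE; last exact: bmD.
by rewrite (expectationD (bm_Lfun bf) (bm_Lfun bg)) !EE.
Qed.

Lemma ExZ c f : bm f -> Ex (fun x => c * f x) = c * Ex f.
Proof.
move=> bf; apply: EFin_inj.
rewrite -EE; last exact: bmM (bm_cst c) bf.
have -> : (fun x => c * f x) = c \o* f by apply/funext => x /=; rewrite mulrC.
by rewrite (expectationZl c (bm_Lfun bf)) EE.
Qed.

Lemma ExN f : bm f -> Ex (fun x => - f x) = - Ex f.
Proof.
move=> bf; rewrite (Ex_ext (g := fun x => (-1) * f x)); last by move=> x; rewrite mulN1r.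
by rewrite ExZ // mulN1r.
Qed.

Lemma ExB f g : bm f -> bm g -> Ex (fun x => f x - g x) = Ex f - Ex g.
Proof. by move=> bf bg; rewrite ExD ?ExN //; exact: bmN. Qed.

Lemma Ex_cst c : Ex (fun _ => c) = c.
Proof. by rewrite /Ex (expectation_cst P c). Qed.

Lemma Ex_ind A : measurable A -> Ex (\1_A) = fine (P A).
Proof. by move=> mA; rewrite /Ex expectation_indic. Qed.

Lemma Ex_ge0 f : bm f -> (forall x, 0 <= f x) -> 0 <= Ex f.
Proof.
move=> bf f0; rewrite -lee_fin -EE //; exact: expectation_ge0.
Qed.

Lemma Ex_le f g : bm f -> bm g -> (forall x, f x <= g x) -> Ex f <= Ex g.
Proof.
move=> bf bg fg; rewrite -subr_ge0 -ExB //; apply: Ex_ge0.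
  exact: bmD bg (bmN bf).
by move=> x; rewrite subr_ge0.
Qed.

Lemma bm_sum (I : Type) (s : seq I) (F : I -> T -> R) :
  (forall i, bm (F i)) -> bm (fun x => \sum_(i <- s) F i x).
Proof.
move=> bF; elim: s => [|a s IH].
  by apply: bm_ext (bm_cst 0) => x; rewrite big_nil.
by apply: bm_ext (bmD (bF a) IH) => x; rewrite big_cons.
Qed.

Lemma bm_prod (I : Type) (s : seq I) (F : I -> T -> R) :
  (forall i, bm (F i)) -> bm (fun x => \prod_(i <- s) F i x).
Proof.
move=> bF; elim: s => [|a s IH].
  by apply: bm_ext (bm_cst 1) => x; rewrite big_nil.
by apply: bm_ext (bmM (bF a) IH) => x; rewrite big_cons.
Qed.

Lemma Ex_sum (I : Type) (s : seq I) (F : I -> T -> R) :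
  (forall i, bm (F i)) -> Ex (fun x => \sum_(i <- s) F i x) = \sum_(i <- s) Ex (F i).
Proof.
move=> bF; elim: s => [|a s IH].
  by rewrite (Ex_ext (g := fun _ => 0)) ?Ex_cst ?big_nil // => x; rewrite big_nil.
rewrite (Ex_ext (g := fun x => F a x + \sum_(i <- s) F i x)); last by move=> x; rewrite big_cons.
by rewrite ExD ?IH ?big_cons //; exact: bm_sum.
Qed.

End ExSec.
Arguments Ex {d T R} P f.
Arguments bm {d T R} f.


Section Prod.
Context d (T : measurableType d) (R : realType) (P : probability T R).
Context (I : eqType) (X : I -> T -> R).
Hypothesis mX : forall i, measurable_fun setT (X i).
Hypothesis indep : mutually_independent P X.

Definition Acap (J : seq I) (B : I -> set R) :=
  \bigcap_(i in [set i | i \in J]) (X i @^-1` B i).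

Lemma Acap_nil B : Acap [::] B = setT.
Proof. by apply/seteqP; split => w //= _ i /=; rewrite in_nil. Qed.

Lemma Acap_cons a J B : Acap (a :: J) B = X a @^-1` B a `&` Acap J B.
Proof.
apply/seteqP; split => w /=.
  move=> h; split; first by apply: h; rewrite /= mem_head.
  by move=> i /= iJ; apply: h; rewrite /= in_cons iJ orbT.
move=> [h1 h2] i /=; rewrite in_cons => /orP [/eqP -> //|iJ].
exact: h2.
Qed.

Lemma Acap_ext J B B' : (forall i, i \in J -> B i = B' i) -> Acap J B = Acap J B'.
Proof.
move=> h; apply/seteqP; split => w /= H i /= iJ.
  by rewrite -h //; apply: H.
by rewrite h //; apply: H.
Qed.

Lemma mpre i A : measurable A -> measurable (X i @^-1` A).
Proof. by move=> mA; rewrite -[X in measurable X]setTI; apply: mX. Qed.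

Lemma mAcap J B : (forall i, measurable (B i)) -> measurable (Acap J B).
Proof.
move=> mB; elim: J => [|a J IH]; first by rewrite Acap_nil.
rewrite Acap_cons; apply: measurableI => //; exact: mpre.
Qed.

Lemma finP A : measurable A -> P A = (fine (P A))%:E.
Proof. by move=> mA; rewrite fineK //; exact: fin_num_measure. Qed.

Lemma indep_cons a J B : uniq (a :: J) -> (forall i, measurable (B i)) ->
  fine (P (Acap (a :: J) B)) = fine (P (X a @^-1` B a)) * fine (P (Acap J B)).
Proof.
move=> u mB.
have hJ : uniq J by case/andP: u.
rewrite /Acap indep // big_cons -indep // -/(Acap J B) fineM //.
  by apply: fin_num_measure; exact: mpre.
by apply: fin_num_measure; exact: mAcap.
Qed.

End Prod.
Arguments Acap {d T R I} X J B.


Section Claim.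
Context d (T : measurableType d) (R : realType) (P : probability T R).
Context (I : eqType) (X : I -> T -> R).
Hypothesis mX : forall i, measurable_fun setT (X i).
Hypothesis indep : mutually_independent P X.

Definition Ek (e : R) (s : I) (k : nat) := X s @^-1` (`[e * k.+1%:R, +oo[%classic).

Lemma mEk e s k : measurable (Ek e s k).
Proof. apply: mpre => //; exact: measurable_itv. Qed.

Definition psiX e N s := fun w => \sum_(k < N) e * \1_(Ek e s k) w.

Lemma bm_psiX e N s : bm (psiX e N s).
Proof. apply: bm_sum => k; apply: bmM; [exact: bm_cst | apply: bm_ind; exact: mEk]. Qed.

Lemma Ex_psiX e N s : Ex P (psiX e N s) = \sum_(k < N) e * fine (P (Ek e s k)).
Proof.
rewrite /psiX Ex_sum; last by move=> k; apply: bmM; [exact: bm_cst | apply: bm_ind; exact: mEk].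
apply: eq_bigr => k _; rewrite ExZ ?Ex_ind //; [exact: mEk | apply: bm_ind; exact: mEk].
Qed.

Lemma claim e N (S Tl : seq I) (B : I -> set R) :
  uniq (S ++ Tl) -> (forall i, measurable (B i)) ->
  Ex P (fun w => (\prod_(s <- S) psiX e N s w) * \1_(Acap X Tl B) w) =
  (\prod_(s <- S) Ex P (psiX e N s)) * fine (P (Acap X Tl B)).
Proof.
elim: S Tl B => [|s S IH] Tl B u mB.
  rewrite big_nil mul1r (Ex_ext P (g := \1_(Acap X Tl B))); last by move=> w; rewrite big_nil mul1r.
  by rewrite Ex_ind //; exact: mAcap.
have sTl : s \notin Tl.
  by move: u; rewrite /= mem_cat negb_or => /andP [/andP [_ ->] _].
pose B' k := fun i => if i == s then (`[e * k.+1%:R, +oo[%classic : set R) else B i.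
have mB' k i : measurable (B' k i).
  by rewrite /B'; case: (i == s) => //; exact: measurable_itv.
have u' : uniq (S ++ s :: Tl) by rewrite -cat1s uniq_catCA.
have AE k : Acap X (s :: Tl) (B' k) = Ek e s k `&` Acap X Tl B.
  rewrite Acap_cons /B' eqxx; congr (_ `&` _); apply: Acap_ext => i iTl.
  by case: ifP => // /eqP eis; move: sTl; rewrite -eis iTl.
rewrite (Ex_ext P (g := fun w => \sum_(k < N) e *
    ((\prod_(s <- S) psiX e N s w) * \1_(Acap X (s :: Tl) (B' k)) w))); last first.
  move=> w; rewrite big_cons /psiX -!mulrA mulr_suml; apply: eq_bigr => k _.
  rewrite AE indicI /=; ring.
rewrite Ex_sum; last first.
  move=> k; apply: bmM; first exact: bm_cst.
  apply: bmM; first by apply: bm_prod => i; exact: bm_psiX.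
  by apply: bm_ind; exact: mAcap.
rewrite big_cons Ex_psiX mulr_suml mulr_suml; apply: eq_bigr => k _.
rewrite ExZ; last first.
  apply: bmM; first by apply: bm_prod => i; exact: bm_psiX.
  by apply: bm_ind; exact: mAcap.
rewrite IH // indep_cons //; last by rewrite /= sTl; move: u; rewrite cat_uniq => /and3P [_ _ ->].
rewrite /B' eqxx -/(Ek e s k).
have -> : Acap X Tl (B' k) = Acap X Tl B.
  apply: Acap_ext => i iTl; rewrite /B'; case: ifP => // /eqP eis; by move: sTl; rewrite -eis iTl.
ring.
Qed.

End Claim.
Arguments psiX {d T R I} X e N s.
Arguments Ek {d T R I} X e s k.


Section RealLemmas.
Context (R : realType).

Lemma psi_bounds (e x : R) N : 0 < e -> 0 <= x ->
  let p := \sum_(k < N) e * ((e * k.+1%:R <= x)%R)%:R in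
  [/\ 0 <= p, p <= x, (e * N%:R <= x -> p = e * N%:R) & (x < e * N%:R -> x - e < p)].
Proof.
move=> e0 x0; elim: N => [|N [IH1 IH2 IH3 IH4]] /=.
  rewrite big_ord0 mulr0; split => //; lra.
rewrite big_ord_recr /= -natr1.
case: (lerP (e * (N%:R + 1)) x) => hx /=.
  have hN : e * N%:R <= x by nra.
  rewrite IH3 //; split; lra.
rewrite mulr0 addr0; split => //; move=> _; case: (lerP (e * N%:R) x) => h; last exact: IH4.
rewrite IH3 //; lra.
Qed.

Lemma prod_bound (J : Type) (s : seq J) (x : J -> R) B :
  (forall i, 0 <= x i <= B) -> 0 <= \prod_(i <- s) x i <= B ^+ size s.
Proof.
move=> hx; elim: s => [|a s /andP [IH1 IH2]]; first by rewrite big_nil expr0 lexx ler01.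
rewrite big_cons /= exprS; have /andP [h1 h2] := hx a.
by rewrite mulr_ge0 //= ler_pM.
Qed.

Lemma prod_diff (J : Type) (s : seq J) (x y : J -> R) B e :
  1 <= B -> 0 <= e -> (forall i, 0 <= x i <= B) -> (forall i, 0 <= y i <= B) ->
  (forall i, `|x i - y i| <= e) ->
  `|\prod_(i <- s) x i - \prod_(i <- s) y i| <= (size s)%:R * B ^+ size s * e.
Proof.
move=> B1 e0 hx hy hxy; elim: s => [|a s IH].
  by rewrite !big_nil subrr normr0 /= mul0r mul0r.
rewrite !big_cons /= exprS -natr1.
set px := \prod_(i <- s) x i; set py := \prod_(i <- s) y i.
set n := (size s)%:R; set Bn := B ^+ size s.
have /andP [py0 pyB] : 0 <= py <= Bn by apply: prod_bound.
have /andP [xa0 xaB] := hx a.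
have E : x a * px - y a * py = x a * (px - py) + (x a - y a) * py by ring.
rewrite E; apply: (le_trans (ler_normD _ _)); rewrite !normrM.
have h1 : `|x a| * `|px - py| <= B * (n * Bn * e).
  by apply: ler_pM => //; rewrite ger0_norm.
have h2 : `|x a - y a| * `|py| <= e * Bn.
  by apply: ler_pM => //; rewrite ger0_norm.
have Bn0 : 0 <= Bn by apply: le_trans pyB.
have h3 : e * Bn <= e * (B * Bn) by apply: ler_wpM2l => //; rewrite ler_peMl.
have h4 : 0 <= n by rewrite /n ler0n.
apply: (le_trans (lerD h1 h2)).
have -> : (n + 1) * (B * Bn) * e = B * (n * Bn * e) + e * (B * Bn) by ring.
by rewrite lerD2l.
Qed.

Lemma eps_zero (a K : R) : 0 <= K -> (forall e, 0 < e -> `|a| <= K * e) -> a = 0.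
Proof.
move=> K0 h; apply/eqP; rewrite -normr_eq0; apply/eqP.
apply: le_anti; rewrite normr_ge0 andbT.
case: (ltrP 0 `|a|) => ha //.
have hK : 0 < K + 1 by lra.
have := h (`|a| / (K + 1)) (divr_gt0 ha hK).
rewrite mulrA ler_pdivlMr // => hh.
nra.
Qed.

End RealLemmas.

Section ProdIndep.
Context d (T : measurableType d) (R : realType) (P : probability T R).
Context (I : eqType) (X : I -> T -> R).
Hypothesis mX : forall i, measurable_fun setT (X i).
Hypothesis indep : mutually_independent P X.
Variable M : R.
Hypothesis hX : forall i w, 0 <= X i w <= M.

Lemma psiX_eq e N s w :
  psiX X e N s w = \sum_(k < N) e * ((e * k.+1%:R <= X s w)%R)%:R.
Proof.
rewrite /psiX; apply: eq_bigr => k _; congr (_ * _); rewrite indicE.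
have -> : (w \in Ek X e s k) = (e * k.+1%:R <= X s w)%R; last by [].
apply/idP/idP.
  by rewrite in_setE /Ek /preimage /= in_itv /= andbT.
by move=> h; rewrite in_setE /Ek /preimage /= in_itv /= andbT.
Qed.

Lemma bmX i : bm (X i).
Proof.
split; first exact: mX.
exists M => w; have /andP [h1 h2] := hX i w; by rewrite ger0_norm.
Qed.

Lemma Ex_bounds f (lo hi : R) : bm f -> (forall w, lo <= f w <= hi) -> lo <= Ex P f <= hi.
Proof.
move=> bf h; apply/andP; split.
  rewrite -[lo](Ex_cst P); apply: Ex_le => //; first exact: bm_cst.
  by move=> w; case/andP: (h w).
rewrite -[hi](Ex_cst P); apply: Ex_le => //; first exact: bm_cst.
by move=> w; case/andP: (h w).
Qed.

Lemma prod_indep (S : seq I) : uniq S ->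
  Ex P (fun w => \prod_(s <- S) X s w) = \prod_(s <- S) Ex P (X s).
Proof.
move=> uS.
set B := `|M| + 1.
have B1 : 1 <= B by rewrite /B lerDr.
have MB : M < B by rewrite /B; have := ler_norm M; lra.
set C := (size S)%:R * B ^+ size S.
have C0 : 0 <= C by rewrite /C mulr_ge0 // exprn_ge0 // (le_trans ler01).
apply/eqP; rewrite -subr_eq0; apply/eqP; apply: (@eps_zero _ _ (C + C)); first lra.
move=> e e0.
pose N := (Num.trunc (B / e)).+1.
have BN : B < e * N%:R.
  by have := truncnS_gt (B / e); rewrite -/N ltr_pdivrMr // mulrC.
have hpsi s w : 0 <= psiX X e N s w <= B /\ `|X s w - psiX X e N s w| <= e.
  have /andP [x0 xM] := hX s w.
  rewrite psiX_eq; have [p0 px _ p4] := @psi_bounds _ e (X s w) N e0 x0.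
  have := p4 (le_lt_trans xM (lt_trans MB BN)) => h.
  split; first by apply/andP; split => //; lra.
  rewrite ger0_norm; lra.
have bpsi s : bm (psiX X e N s) by exact: bm_psiX.
have bPX : bm (fun w => \prod_(s <- S) X s w) by apply: bm_prod => i; exact: bmX.
have bPpsi : bm (fun w => \prod_(s <- S) psiX X e N s w) by apply: bm_prod.
have hclaim : Ex P (fun w => \prod_(s <- S) psiX X e N s w) = \prod_(s <- S) Ex P (psiX X e N s).
  have := @claim _ _ _ P _ X mX indep e N S [::] (fun _ => setT) _ _.
  rewrite Acap_nil probability_setT /= mulr1 => <- //; last by rewrite cats0.
  by apply: Ex_ext => w; rewrite indicE in_setT mulr1.
have h1 : `|Ex P (fun w => \prod_(s <- S) X s w) - Ex P (fun w => \prod_(s <- S) psiX X e N s w)| <= C * e.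
  rewrite -ExB // ler_norml; apply: Ex_bounds.
    by apply: bmD => //; exact: bmN.
  move=> w /=; rewrite -ler_norml.
  apply: prod_diff => //; try lra.
  - by move=> i; have /andP [h h'] := hX i w; rewrite h /=; lra.
  - by move=> i; case: (hpsi i w).
  - by move=> i; case: (hpsi i w).
have h2 : `|\prod_(s <- S) Ex P (psiX X e N s) - \prod_(s <- S) Ex P (X s)| <= C * e.
  rewrite distrC; apply: prod_diff => //; try lra.
  - move=> i; apply: Ex_bounds; first exact: bmX.
    by move=> w; have /andP [h h'] := hX i w; rewrite h /=; lra.
  - move=> i; apply: Ex_bounds => // w; by case: (hpsi i w).
  - move=> i; rewrite -ExB //; last exact: bmX.
    rewrite ler_norml; apply: Ex_bounds; first by apply: bmD; [exact: bmX | exact: bmN].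
    by move=> w; case: (hpsi i w) => _; rewrite -ler_norml.
rewrite hclaim in h1.
rewrite mulrDl.
have := ler_normD (Ex P (fun w => \prod_(s <- S) X s w) - \prod_(s <- S) Ex P (psiX X e N s))
   (\prod_(s <- S) Ex P (psiX X e N s) - \prod_(s <- S) Ex P (X s)).
rewrite addrA subrK => h3.
apply: (le_trans h3); exact: lerD.
Qed.

End ProdIndep.

Lemma geom_sum (R : realType) (a : R) k :
  (\sum_(0 <= j < k) a ^+ j) * (1 - a) = 1 - a ^+ k.
Proof.
elim: k => [|k IH]; first by rewrite big_geq // mul0r expr0 subrr.
rewrite big_nat_recr //= mulrDl IH exprS; ring.
Qed.

Definition time (i : nat + (nat + nat)) : nat :=
  match i with inl k => k | inr (inl k) => k | inr (inr k) => k end.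

Unset Implicit Arguments.

Theorem lemma11 (d : measure_display) (T : measurableType d) (R : realType)
  (P : probability T R)
  (delta dI v : nat -> T -> R)
  (delta_max d_max v_min v_max : R)
  (delta_bar dI_bar v_bar : R)
  (S0 I0 K : R)
  (S I Rc D u : nat -> T -> R) :
  (* random variables *)
  (forall k, measurable_fun setT (delta k)) ->
  (forall k, measurable_fun setT (dI k)) ->
  (forall k, measurable_fun setT (v k)) ->
  (* each sequence i.i.d., and the three sequences mutually independent *)
  mutually_independent P (three_seqs delta dI v) ->
  identically_distributed P delta ->
  identically_distributed P dI ->
  identically_distributed P v ->
  (* bounds *)
  (forall k w, 0 <= delta k w <= delta_max) ->
  (forall k w, 0 <= dI k w <= d_max) -> d_max < 1 ->
  0 < v_min -> v_max <= 1 ->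
  (forall k w, v_min <= v k w <= v_max) ->
  (* means *)
  (forall k, ('E_P[delta k] = delta_bar%:E)%E) ->
  (forall k, ('E_P[dI k] = dI_bar%:E)%E) ->
  (forall k, ('E_P[v k] = v_bar%:E)%E) ->
  (* dynamics *)
  (forall w, S 0%N w = S0) -> (forall w, I 0%N w = I0) ->
  (forall w, Rc 0%N w = 0) -> (forall w, D 0%N w = 0) ->
  0 < I0 -> I0 * delta_max < S0 ->
  (forall k w, S k.+1 w = S k w - delta k w * I k w) ->
  (forall k w, I k.+1 w = (1 + delta k w) * I k w - v k w * u k w - dI k w * I k w) ->
  (forall k w, Rc k.+1 w = Rc k w + v k w * u k w) ->
  (forall k w, D k.+1 w = D k w + dI k w * I k w) ->
  (* proportional control *)
  0 <= K -> K <= (1 - d_max) / v_max ->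
  (forall k w, u k w = K * I k w) ->
  forall k : nat, (1 <= k)%N ->
    (0 < K * v_bar - delta_bar + dI_bar ->
      ('E_P[D k] = (dI_bar * I0 * (1 - (1 + delta_bar - dI_bar - K * v_bar) ^+ k)
                    / (K * v_bar - delta_bar + dI_bar))%:E)%E) /\
    (K * v_bar - delta_bar + dI_bar = 0 ->
      ('E_P[D k] = (dI_bar * I0 * k%:R)%:E)%E).
Proof.
move=> mdel mdI mv indep _ _ _ hdel hdI _ vmin0 _ hv Edel EdI Ev _ I0E _ D0E _ _ _ IS _ DS _ _ uE k _.
pose X := three_seqs delta dI v.
have mX : forall i, measurable_fun setT (X i) by case=> [j|[j|j]] /=.
pose M := `|delta_max| + `|d_max| + `|v_max|.
have hX : forall i w, 0 <= X i w <= M.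
  have h1 := ler_norm delta_max; have h2 := ler_norm d_max; have h3 := ler_norm v_max.
  have h4 := normr_ge0 delta_max; have h5 := normr_ge0 d_max; have h6 := normr_ge0 v_max.
  case=> [j|[j|j]] w /=.
  - have /andP [a b] := hdel j w; apply/andP; split => //; rewrite /M; lra.
  - have /andP [a b] := hdI j w; apply/andP; split => //; rewrite /M; lra.
  - have /andP [a b] := hv j w; apply/andP; split; rewrite /M; lra.
pose g i w := 1 + delta i w - K * v i w - dI i w.
pose a := 1 + delta_bar - dI_bar - K * v_bar.
have HI : forall k w, I k w = I0 * \prod_(0 <= i < k) g i w.
  elim=> [|j IH] w; first by rewrite big_geq // mulr1 I0E.
  by rewrite IS uE IH big_nat_recr //= /g; ring.
have HD : forall k w, D k w = \sum_(0 <= j < k) dI j w * I j w.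
  elim=> [|j IH] w; first by rewrite big_geq // D0E.
  by rewrite DS IH big_nat_recr.
have bmXi : forall i, bm (X i) by move=> i; exact: bmX hX i.
have bmg : forall i, bm (g i).
  move=> i; rewrite /g; apply: bmD; last by apply: bmN; exact: bmXi (inr (inl i)).
  apply: bmD; last by apply: bmN; apply: bmM; [exact: bm_cst | exact: bmXi (inr (inr i))].
  by apply: bmD; [exact: bm_cst | exact: bmXi (inl i)].
have bmF : forall S' j, bm (fun w => (\prod_(s <- S') X s w) * \prod_(0 <= i < j) g i w).
  by move=> S' j; apply: bmM; apply: bm_prod.
have G : forall j S', uniq S' -> (forall s, s \in S' -> (j <= time s)%N) ->
    Ex P (fun w => (\prod_(s <- S') X s w) * \prod_(0 <= i < j) g i w) =
    (\prod_(s <- S') Ex P (X s)) * a ^+ j.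
  elim=> [|j IH] S' uS hS.
    rewrite expr0 mulr1 -(@prod_indep _ _ _ P _ X mX indep M hX S' uS); apply: Ex_ext => w.
    by rewrite big_geq // mulr1.
  have hS' : forall s, s \in S' -> (j <= time s)%N.
    by move=> s /hS; apply: leq_trans.
  have nin : forall s, time s = j -> s \notin S'.
    move=> s ts; apply/negP => /hS; rewrite ts ltnn //.
  have u1 : forall s, time s = j -> uniq (s :: S') by move=> s ts; rewrite /= nin.
  have h1 : forall s, time s = j -> forall s', s' \in s :: S' -> (j <= time s')%N.
    by move=> s ts s'; rewrite in_cons => /orP [/eqP -> | /hS' //]; rewrite ts.
  rewrite (Ex_ext P (g := fun w =>
     (\prod_(s <- S') X s w) * \prod_(0 <= i < j) g i w
   + (\prod_(s <- inl j :: S') X s w) * \prod_(0 <= i < j) g i w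
   - K * ((\prod_(s <- inr (inr j) :: S') X s w) * \prod_(0 <= i < j) g i w)
   - (\prod_(s <- inr (inl j) :: S') X s w) * \prod_(0 <= i < j) g i w)); last first.
    by move=> w; rewrite big_nat_recr //= !big_cons /g /=; ring.
  have b0 := bmF S' j; have b1 := bmF (inl j :: S') j.
  have b2 := bmF (inr (inr j) :: S') j; have b3 := bmF (inr (inl j) :: S') j.
  have bK2 : bm (fun w => K * ((\prod_(s <- inr (inr j) :: S') X s w) * \prod_(0 <= i < j) g i w)).
    by apply: bmM => //; exact: bm_cst.
  rewrite ExB; [| exact: bmD (bmD b0 b1) (bmN bK2) | exact: b3].
  rewrite ExB; [| exact: bmD b0 b1 | exact: bK2].
  rewrite ExD // ExZ //.
  rewrite IH // IH //; [|exact: u1|exact: h1].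
  rewrite IH //; [|exact: u1|exact: h1].
  rewrite IH //; [|exact: u1|exact: h1].
  rewrite !big_cons.
  have -> : Ex P (X (inl j)) = delta_bar by rewrite /Ex /= Edel.
  have -> : Ex P (X (inr (inl j))) = dI_bar by rewrite /Ex /= EdI.
  have -> : Ex P (X (inr (inr j))) = v_bar by rewrite /Ex /= Ev.
  rewrite exprS /a; ring.
have bmD' : bm (D k).
  apply: (bm_ext (f := fun w => \sum_(0 <= j < k) dI j w * I j w)); first by move=> w; rewrite HD.
  apply: bm_sum => j; apply: (bm_ext (f := fun w => I0 * ((\prod_(s <- [:: inr (inl j)]) X s w) * \prod_(0 <= i < j) g i w))).
    by move=> w; rewrite HI big_seq1 /=; ring.
  by apply: bmM; [exact: bm_cst | exact: bmF].
have ED : Ex P (D k) = I0 * dI_bar * \sum_(0 <= j < k) a ^+ j.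
  rewrite (Ex_ext P (g := fun w => \sum_(0 <= j < k) I0 * ((\prod_(s <- [:: inr (inl j)]) X s w) * \prod_(0 <= i < j) g i w))); last first.
    by move=> w; rewrite HD; apply: eq_bigr => j _; rewrite HI big_seq1 /=; ring.
  rewrite Ex_sum; last by move=> j; apply: bmM; [exact: bm_cst | exact: bmF].
  rewrite mulr_sumr; apply: eq_bigr => j _.
  rewrite ExZ // G //; last by move=> s; rewrite inE => /eqP ->.
  by rewrite big_seq1 (_ : Ex P (X (inr (inl j))) = dI_bar) ?mulrA // /Ex /= EdI.
rewrite (EE P bmD') ED; split => hc.
  congr (_%:E).
  have -> : K * v_bar - delta_bar + dI_bar = 1 - a by rewrite /a; ring.
  have hc' : 1 - a != 0 by rewrite /a; apply/eqP; lra.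
  rewrite -(@geom_sum R a k); field.
  exact: hc'.
congr (_%:E).
have -> : a = 1 by rewrite /a; lra.
rewrite (eq_bigr (fun _ => 1)); last by move=> j _; rewrite expr1n.
by rewrite sumr_const_nat subn0 (mulrC I0).
Qed.
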